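(* Let $Y\in\mathbb{C}^{(n\times n)\cdot d}$, let $f$ be an NC function uniformly analytic in a uniformly open neighbourhood of $Y$, with Taylor–Taylor coefficients $\hat f_{\alpha,\beta;\omega}$ at $Y$ as in the context, and for $1\le a,b\le n$ let $f_{a,b}$ be the formal power series in $dn^2$ non-commuting variables $\{\mathfrak{z}_{i,j,k}:1\le i,j\le n,1\le k\le d\}$, $$f_{a,b}=\sum_{\ell\ge0}\ \sum_{\substack{\alpha=a_0\cdots a_{\ell-1},\ \beta=b_0\cdots b_{\ell-1}\in\mathbb{F}^+_n\\ \omega=w_1\cdots w_\ell\in\mathbb{F}^+_d}}\hat f_{\alpha a,\beta b;\omega}\ \mathfrak{z}_{a_0,b_0,w_1}\mathfrak{z}_{a_1,b_1,w_2}\cdots\mathfrak{z}_{a_{\ell-1},b_{\ell-1},w_\ell}.$$ Then for every $1\le a,b\le n$ the radius of convergence $R_{a,b}$ of $f_{a,b}$ at $0$ is positive.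
   Context: $\mathbb{C}^{(k\times k)\cdot d}$ denotes column $d$-tuples of $k\times k$ matrices with $\|X\|_{\mathrm{col}}$ the operator norm of the stacked matrix; the uniform topology is generated by the sets $\bigsqcup_m\{X\in\mathbb{C}^{(mk\times mk)\cdot d}:\|X-I_m\otimes Z\|_{\mathrm{col}}<r\}$. An NC function is a map on a direct-sum-closed set that is graded, respects direct sums and joint similarities; it is uniformly analytic if its domain is uniformly open and it is locally bounded in the uniform topology. Such $f$ has a Taylor–Taylor expansion at $Y$: unique $|\omega|$-linear maps $f_\omega:(\mathbb{C}^{n\times n})^{|\omega|}\to\mathbb{C}^{n\times n}$ ($\omega\in\mathbb{F}^+_d$, the free monoid on $\{1,\dots,d\}$) with $f(X)=\sum_\omega f_\omega\circ(X-I_m\otimes Y)^{\odot\omega}$ near $Y$ (blockwise application to Haagerup products of $m\times m$ block matrices). Each $f_\omega$ with $|\omega|=\ell$ is written uniquely as $f_\omega(G_1,\dots,G_\ell)=\sum\hat f_{\alpha,\beta;\omega}E_{a_0,b_0}G_1E_{a_1,b_1}\cdots G_\ell E_{a_\ell,b_\ell}$, summing over $\alpha=a_0\cdots a_\ell,\beta=b_0\cdots b_\ell\in\mathbb{F}^+_n$, with $E_{i,j}$ the matrix units. The radius of convergence at $0$ of a formal power series $g=\sum_\nu\hat g_\nu\mathfrak{z}^\nu$ in $N$ non-commuting variables is $R_g$ with $1/R_g=\limsup_{\ell\to\infty}\big(\sum_{|\nu|=\ell}|\hat g_\nu|^2\big)^{1/(2\ell)}$. *)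

(* Defs.v *)
From HB Require Import structures.
From mathcomp Require Import all_boot all_order all_algebra.
From mathcomp Require Import complex mxtens.
From mathcomp Require Import boolp classical_sets reals ereal topology sequences exp.
Set Implicit Arguments. Unset Strict Implicit. Unset Printing Implicit Defensive.
Import Order.TTheory GRing.Theory Num.Theory.
Local Open Scope ring_scope.
Local Open Scope classical_set_scope.

Section NC.
Variable R : realType.
Local Notation C := R[i].

Definition normsq (z : C) : R := complex.Re z ^+ 2 + complex.Im z ^+ 2.

Definition vsq N (v : 'cV[C]_N) : R := \sum_(i < N) normsq (v i 0).

(* ||X||_col : operator norm of the column-stacked d-tuple X *)
Definition colnorm d N (X : 'I_d -> 'M[C]_N) : R :=
  sup [set t | exists v : 'cV[C]_N, vsq v <= 1 /\
                 t = Num.sqrt (\sum_(k < d) vsq (X k *m v))].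

Definition opnorm N (A : 'M[C]_N) : R := colnorm (fun _ : 'I_1 => A).

(* block matrices : the (i,a)-th row of an (m*k)x(m*k) matrix is i*k+a *)
Definition blockmx_of m k (B : 'I_m -> 'I_m -> 'M[C]_k) : 'M[C]_(m * k) :=
  \matrix_(p, q) B (mxtens_unindex p).1 (mxtens_unindex q).1
                   (mxtens_unindex p).2 (mxtens_unindex q).2.

Definition block m k (M : 'M[C]_(m * k)) (i j : 'I_m) : 'M[C]_k :=
  \matrix_(a, b) M (mxtens_index (i, a)) (mxtens_index (j, b)).

Definition ampl m k (Z : 'M[C]_k) : 'M[C]_(m * k) :=
  blockmx_of (fun i j : 'I_m => if i == j then Z else 0).

Arguments ampl m {k}.

Definition inball d m k (Z : 'I_d -> 'M[C]_k) (r : R)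
    (X : 'I_d -> 'M[C]_(m * k)) : Prop :=
  colnorm (fun s => X s - ampl m (Z s)) < r.

Arguments inball {d} m {k}.

Definition ncset d := forall N : nat, set ('I_d -> 'M[C]_N).
Definition ncmap d := forall N : nat, ('I_d -> 'M[C]_N) -> 'M[C]_N.

Definition dsum d N M (X : 'I_d -> 'M[C]_N) (Z : 'I_d -> 'M[C]_M)
  : 'I_d -> 'M[C]_(N + M) := fun s => block_mx (X s) 0 0 (Z s).

Definition dsum_closed d (Om : ncset d) : Prop :=
  forall N M X Z, Om N X -> Om M Z -> Om (N + M)%N (dsum X Z).

(* NC function: graded (by its type), respects direct sums and similarities *)
Definition nc_function d (Om : ncset d) (f : ncmap d) : Prop :=
  [/\ dsum_closed Om,
      (forall N M X Z, Om N X -> Om M Z ->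
         f (N + M)%N (dsum X Z) = block_mx (f N X) 0 0 (f M Z)) &
      (forall N X (S : 'M[C]_N), S \in unitmx -> Om N X ->
         Om N (fun s => S *m X s *m invmx S) ->
         f N (fun s => S *m X s *m invmx S) = S *m f N X *m invmx S)].

(* open in the uniform topology (the basic sets form a base) *)
Definition uniformly_open d (Om : ncset d) : Prop :=
  forall N X, Om N X -> exists2 r : R, 0 < r &
    forall m, (0 < m)%N -> forall X', inball m X r X' -> Om (m * N)%N X'.

Definition locally_bounded d (Om : ncset d) (f : ncmap d) : Prop :=
  forall N X, Om N X -> exists2 r : R, 0 < r & exists M : R,
    forall m, (0 < m)%N -> forall X', inball m X r X' ->
      Om (m * N)%N X' /\ opnorm (f (m * N)%N X') <= M.

Definition unif_analytic d (Om : ncset d) (f : ncmap d) : Prop :=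
  uniformly_open Om /\ locally_bounded Om f.

(* E_{a0,b0} G_1 E_{a1,b1} ... G_l E_{al,bl} *)
Definition chain n l (al be : (l.+1).-tuple 'I_n) (G : 'I_l -> 'M[C]_n)
  : 'M[C]_n :=
  foldl (fun M k => M *m G k *m
           delta_mx (tnth al (lift ord0 k)) (tnth be (lift ord0 k)))
        (delta_mx (tnth al ord0) (tnth be ord0)) (enum 'I_l).

(* the |w|-linear map f_w determined by the coefficients fhat_{al,be;w} *)
Definition TTmap d n (fhat : seq 'I_d -> seq 'I_n -> seq 'I_n -> C) l
    (w : l.-tuple 'I_d) (G : 'I_l -> 'M[C]_n) : 'M[C]_n :=
  \sum_(al : (l.+1).-tuple 'I_n) \sum_(be : (l.+1).-tuple 'I_n)
     fhat w al be *: chain al be G.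

(* f_w o (H_1 (.) ... (.) H_l) applied blockwise, H_k = Delta_{w_k} *)
Definition haag d n (fhat : seq 'I_d -> seq 'I_n -> seq 'I_n -> C) m l
    (w : l.-tuple 'I_d) (Delta : 'I_d -> 'M[C]_(m * n)) : 'M[C]_(m * n) :=
  blockmx_of (fun i j : 'I_m =>
    \sum_(p : {ffun 'I_l.+1 -> 'I_m} | (p ord0 == i) && (p ord_max == j))
      TTmap fhat w (fun k => block (Delta (tnth w k))
                               (p (widen_ord (leqnSn l) k)) (p (lift ord0 k)))).

(* partial sums sum_{|w| < L} f_w o (X - I_m (x) Y)^{(.) w} *)
Definition TTsum d n (fhat : seq 'I_d -> seq 'I_n -> seq 'I_n -> C)
    (Y : 'I_d -> 'M[C]_n) m (X : 'I_d -> 'M[C]_(m * n)) (L : nat)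
  : 'M[C]_(m * n) :=
  \sum_(l < L) \sum_(w : l.-tuple 'I_d)
     haag fhat w (fun s => X s - ampl m (Y s)).

(* fhat are the Taylor-Taylor coefficients of f at Y : the TT series
   converges entrywise to f on a basic uniform neighbourhood of Y in Om *)
Definition TT_expansion d n (Om : ncset d) (f : ncmap d) (Y : 'I_d -> 'M[C]_n)
    (fhat : seq 'I_d -> seq 'I_n -> seq 'I_n -> C) : Prop :=
  exists2 r : R, 0 < r & forall m, (0 < m)%N ->
    forall X : 'I_d -> 'M[C]_(m * n), inball m Y r X ->
      Om (m * n)%N X /\
      forall p q (eps : R), 0 < eps -> exists L0 : nat, forall L, (L0 <= L)%N ->
        normsq ((TTsum fhat Y X L) p q - f (m * n)%N X p q) < eps.

(* radius of convergence at 0 of a formal power series in non-commuting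
   variables indexed by the finite type V: 1/R = limsup (sum |g_nu|^2)^(1/2l) *)
Definition radius (V : finType) (g : seq V -> C) : \bar R :=
  let L := limn_esup (fun l : nat =>
     ((\sum_(nu : l.-tuple V) normsq (g nu)) `^ ((2 * l)%:R)^-1)%:E) in
  if L == 0%E then +oo%E else if L == +oo%E then 0%E else ((fine L)^-1)%:E.

(* the series f_{a,b} in the variables z_{i,j,k}, V = 'I_n * 'I_n * 'I_d *)
Definition fab d n (fhat : seq 'I_d -> seq 'I_n -> seq 'I_n -> C) (a b : 'I_n)
  : seq ('I_n * 'I_n * 'I_d) -> C :=
  fun nu => fhat (map (fun v => v.2) nu)
                 (rcons (map (fun v => v.1.1) nu) a)
                 (rcons (map (fun v => v.1.2) nu) b).

End NC.

(* Main.v *)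
Require Import Defs.
From HB Require Import structures.
From mathcomp Require Import all_boot all_order all_algebra.
From mathcomp Require Import complex mxtens.
From mathcomp Require Import boolp classical_sets reals ereal topology sequences exp.
Import Order.TTheory GRing.Theory Num.Theory.
Local Open Scope ring_scope.

Module Aux.
From mathcomp Require Import normedtype.
Local Open Scope ereal_scope.
Lemma esup_bounds (R : realType) (u : (\bar R)^nat) (B : R) :
  (forall l, 0 <= u l) -> (forall l, (0 < l)%N -> u l <= B%:E) ->
  0 <= limn_esup u /\ limn_esup u <= B%:E.
Proof.
move=> u0 uB; rewrite limn_esup_lim; split.
  apply: lime_ge; first exact: is_cvg_esups.
  apply: nearW => k; apply: le_trans (u0 k) _.
  by apply: ereal_sup_ubound; exists k => /=.
apply: lime_le; first exact: is_cvg_esups.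
near=> k; apply: ge_ereal_sup => _ [j /= jk <-]; apply: uB.
apply: leq_trans jk; near: k; by exists 1%N.
Unshelve. all: by end_near. Qed.
End Aux.
Lemma radius_pos (R : realType) (V : finType) (g : seq V -> R[i]) (K : R) :
  0 <= K ->
  (forall l, (0 < l)%N -> \sum_(nu : l.-tuple V) normsq (g nu) <= K ^+ l) ->
  (0 < radius g)%E.
Proof.
move=> K0 HK.
have Hb : forall l, (0 < l)%N ->
  (((\sum_(nu : l.-tuple V) normsq (g nu)) `^ ((2 * l)%:R)^-1)%:E <= (K `^ 2^-1)%:E)%E.
  move=> l l0; rewrite lee_fin.
  apply: le_trans (ge0_ler_powR _ _ _ (HK l l0)) _.
  - by rewrite invr_ge0 ler0n.
  - by rewrite nnegrE; apply: sumr_ge0 => nu _; rewrite /normsq addr_ge0 // sqr_ge0.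
  - by rewrite nnegrE exprn_ge0.
  rewrite -powR_mulrn // -powRrM natrM; rewrite le_eqVlt; apply/orP; left; apply/eqP; congr (_ `^ _).
  have ln0 : (l%:R : R) != 0 by rewrite pnatr_eq0 -lt0n.
  by rewrite invfM mulrC -mulrA mulVf ?mulr1.
have [L0 LB] := @Aux.esup_bounds R (fun l : nat =>
     ((\sum_(nu : l.-tuple V) normsq (g nu)) `^ ((2 * l)%:R)^-1)%:E)
   (K `^ 2^-1) (fun l => powR_ge0 _ _) Hb.
rewrite /radius; set L := limn_esup _ in L0 LB *.
case: ifP => // /negbT L0'; case: ifP => [/eqP LB'|_]; first by rewrite LB' in LB.
move: L0 LB L0'; case: L => [r||] //= r0 _ rn0.
rewrite lte_fin invr_gt0 lt_def -lee_fin r0 andbT; by move: rn0; rewrite eqe.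
Qed.
Local Open Scope complex_scope.
Set Implicit Arguments. Unset Strict Implicit.
Section Norms.
Variable R : realType.
Local Notation C := R[i].
Local Notation nc := (@Normc.normc R).

Lemma normsq_ge0 (z : C) : 0 <= normsq z.
Proof. by rewrite /normsq addr_ge0 // sqr_ge0. Qed.

Lemma normsqE (z : C) : normsq z = nc z ^+ 2.
Proof. by case: z => x y; rewrite /normsq /= sqr_sqrtr // addr_ge0 // sqr_ge0. Qed.

Lemma nc_ge0 (z : C) : 0 <= nc z.
Proof. by case: z => x y; rewrite /= sqrtr_ge0. Qed.

Lemma normsq_eq0 (z : C) : normsq z = 0 -> z = 0.
Proof.
case: z => x y; rewrite /normsq /= => /eqP.
rewrite paddr_eq0 ?sqr_ge0 // !sqrf_eq0 => /andP[/eqP -> /eqP ->] //.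
Qed.

Lemma normsq_realM (t : R) (z : C) : normsq (t%:C * z) = t ^+ 2 * normsq z.
Proof.
case: z => x y; rewrite /normsq /= !mul0r !subr0 !addr0.
by rewrite !exprMn mulrDr.
Qed.

Lemma vsq_ge0 N (v : 'cV[C]_N) : 0 <= vsq v.
Proof. by apply: sumr_ge0 => i _; exact: normsq_ge0. Qed.

Lemma nc_sum (I : Type) (r : seq I) (F : I -> C) :
  nc (\sum_(i <- r) F i) <= \sum_(i <- r) nc (F i).
Proof.
apply: (big_ind2 (fun x y => nc x <= y)).
- by rewrite Normc.normc0.
- move=> x1 x2 y1 y2 h1 h2; apply: le_trans (le_normcD _ _) _; exact: lerD.
- by [].
Qed.

Lemma vsq_mul_bound N (A : 'M[C]_N) (v : 'cV[C]_N) : vsq v <= 1 ->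
  vsq (A *m v) <= \sum_(p < N) (\sum_(q < N) nc (A p q)) ^+ 2.
Proof.
move=> hv; apply: ler_sum => p _; rewrite normsqE mxE.
have h0 : 0 <= nc (\sum_j A p j * v j 0) by exact: nc_ge0.
rewrite ler_pXn2r // ?nnegrE //; last by apply: sumr_ge0 => *; exact: nc_ge0.
apply: le_trans; first exact: nc_sum. apply: ler_sum => q _.
rewrite Normc.normcM; rewrite -[X in _ <= X]mulr1; apply: ler_wpM2l; first exact: nc_ge0.
have : nc (v q 0) ^+ 2 <= 1.
  rewrite -normsqE; apply: le_trans hv; rewrite /vsq (bigD1 q) //=.
  by rewrite lerDl; apply: sumr_ge0 => *; exact: normsq_ge0.
by move=> h; rewrite -(ler_pXn2r (_ : 0 < 2)%N) ?nnegrE ?nc_ge0 ?ler01 // expr1n.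
Qed.

Lemma entry_le_opnorm N (A : 'M[C]_N) p q :
  Num.sqrt (normsq (A p q)) <= opnorm A.
Proof.
rewrite /opnorm /colnorm.
have hub : has_ubound [set t | (exists v : 'cV_N,
                vsq (R:=R) v <= 1 /\
                t = Num.sqrt (\sum_(k < 1) vsq (R:=R) (A *m v)))].
  exists (Num.sqrt (\sum_(p < N) (\sum_(q < N) nc (A p q)) ^+ 2)).
  move=> x [v [hv ->]]; rewrite big_ord1 ler_sqrt; last first.
    by apply: sumr_ge0 => *; rewrite sqr_ge0.
  exact: vsq_mul_bound.
apply: le_trans (ub_le_sup hub _); last first.
  exists (delta_mx q 0); split; last by [].
  rewrite /vsq (bigD1 q) //= big1 ?addr0.
    by rewrite mxE !eqxx /normsq /= expr1n expr0n /= addr0.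
  by move=> i /negbTE hi; rewrite mxE hi /normsq /= expr0n /= addr0.
rewrite big_ord1 ler_sqrt; last exact: vsq_ge0.
rewrite /vsq (bigD1 p) //= -[X in X <= _]addr0 lerD //.
  rewrite mxE (bigD1 q) //= mxE !eqxx mulr1 big1 ?addr0 //.
  by move=> j /negbTE hj; rewrite mxE hj mulr0.
by apply: sumr_ge0 => *; exact: normsq_ge0.
Qed.

End Norms.
Section Chain.
Variable R : realType.
Local Notation C := R[i].
Variable n : nat.

Lemma foldl_delta (c : nat -> C) (U V X Q : nat -> 'I_n) (p : 'I_n) len :
  forall j (g : C),
  foldl (fun M k => M *m (c k *: delta_mx (U k) (V k)) *m delta_mx (X k) (Q k.+1))
     (g *: delta_mx p (Q j)) (iota j len)
  = (if all (fun k => (Q k == U k) && (V k == X k)) (iota j len)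
     then g * \prod_(k <- iota j len) c k else 0) *: delta_mx p (Q (j + len)%N).
Proof.
elim: len => [|len IH] j g /=; first by rewrite big_nil mulr1 addn0.
rewrite -!scalemxAl -!scalemxAr -!scalemxAl scalerA.
rewrite big_cons -addSnnS.
have [e1|e1] /= := eqVneq (Q j) (U j); have [e2|e2] /= := eqVneq (V j) (X j).
- rewrite e1 mul_delta_mx e2 mul_delta_mx IH.
  by case: ifP => _; rewrite ?mulrA // scale0r.
- rewrite e1 mul_delta_mx mul_delta_mx_cond (negbTE e2) mulr0n !scaler0.
  by rewrite -(scale0r (delta_mx p (Q j.+1))) IH; case: ifP; rewrite ?mul0r scale0r.
- rewrite mul_delta_mx_cond (negbTE e1) mulr0n mul0mx scaler0.
  by rewrite -(scale0r (delta_mx p (Q j.+1))) IH; case: ifP; rewrite ?mul0r scale0r.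
- rewrite mul_delta_mx_cond (negbTE e1) mulr0n mul0mx scaler0.
  by rewrite -(scale0r (delta_mx p (Q j.+1))) IH; case: ifP; rewrite ?mul0r scale0r.
Qed.

Lemma foldl_zero (l : nat) (G E : 'I_l -> 'M[C]_n) (s : seq 'I_l) :
  forall M : 'M[C]_n, (exists2 k, k \in s & G k = 0) ->
  foldl (fun M k => M *m G k *m E k) M s = 0.
Proof.
have Z : forall s', foldl (fun (M : 'M[C]_n) k => M *m G k *m E k) 0 s' = 0.
  by elim=> [|k s' IH] //=; rewrite !mul0mx.
elim: s => [|k s IH] M [k' //]; rewrite inE => /orP[/eqP -> Gk|ks Gk] /=.
  by rewrite Gk mulmx0 mul0mx Z.
by apply: IH; exists k'.
Qed.

Lemma foldl_ext (T S : Type) (F1 F2 : T -> S -> T) x s :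
  (forall a b, F1 a b = F2 a b) -> foldl F1 x s = foldl F2 x s.
Proof. by move=> e; elim: s x => //= b s IH x; rewrite e IH. Qed.

Lemma foldl_map' (T S S' : Type) (F : T -> S' -> T) (h : S -> S') x s :
  foldl F x (map h s) = foldl (fun a b => F a (h b)) x s.
Proof. by elim: s x => //= b s IH x. Qed.

Lemma chain_zero l (al be : (l.+1).-tuple 'I_n) (G : 'I_l -> 'M[C]_n) k :
  G k = 0 -> chain al be G = 0.
Proof.
move=> Gk; rewrite /chain; apply: foldl_zero; exists k => //; exact: mem_enum.
Qed.

Lemma chain_delta l (al be : (l.+1).-tuple 'I_n) (G : 'I_l -> 'M[C]_n)
   (c : nat -> C) (U V : nat -> 'I_n) x0 :
  (forall k : 'I_l, G k = c k *: delta_mx (U k) (V k)) ->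
  chain al be G =
  (if all (fun k => (nth x0 be k == U k) && (V k == nth x0 al k.+1)) (iota 0 l)
   then \prod_(k <- iota 0 l) c k else 0) *: delta_mx (tnth al ord0) (tnth be ord_max).
Proof.
move=> HG; rewrite /chain.
have -> : delta_mx (tnth al ord0) (tnth be ord0) =
   (1 : C) *: delta_mx (tnth al ord0) (nth x0 be 0).
  by rewrite scale1r -(tnth_nth x0 be ord0).
rewrite (@foldl_ext _ _ _ (fun (M : 'M[C]_n) (k : 'I_l) =>
   M *m (c k *: delta_mx (U k) (V k)) *m delta_mx (nth x0 al k.+1) (nth x0 be k.+1))).
  rewrite -(@foldl_map' _ _ _ (fun (M : 'M[C]_n) k => M *m (c k *: delta_mx (U k) (V k)) *m
        delta_mx (nth x0 al k.+1) (nth x0 be k.+1))).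
  rewrite val_enum_ord foldl_delta add0n mul1r (tnth_nth x0 be ord_max) //.
move=> M k; rewrite HG (tnth_nth x0 al) (tnth_nth x0 be) lift0 //.
Qed.

End Chain.
Section Delta.
Variable R : realType.
Local Notation C := R[i].
Variables (n d l : nat) (t : R) (A B : nat -> 'I_n) (W : nat -> 'I_d).

Local Notation I := 'I_(l.+1 * n).
Definition tgt (P : I) : I :=
  mxtens_index (inord (mxtens_unindex P).1.+1 : 'I_l.+1, A (mxtens_unindex P).1.+1).
Definition actp (P : I) : bool :=
  ((mxtens_unindex P).1 < l)%N && ((mxtens_unindex P).2 == B (mxtens_unindex P).1).
Definition Dl (s : 'I_d) : 'M[C]_(l.+1 * n) :=
  \matrix_(P, Q) if actp P && (W (mxtens_unindex P).1 == s) && (Q == tgt P)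
                 then (t%:C)%C else 0.

Lemma Dl_mul s (v : 'cV[C]_(l.+1 * n)) P :
  (Dl s *m v) P 0 = if actp P && (W (mxtens_unindex P).1 == s)
                    then (t%:C)%C * v (tgt P) 0 else 0.
Proof.
rewrite mxE; case: ifP => h.
  rewrite (bigD1 (tgt P)) //= mxE h eqxx big1 ?addr0 // => Q hQ.
  by rewrite mxE h /= (negbTE hQ) mul0r.
by rewrite big1 // => Q _; rewrite mxE h mul0r.
Qed.

Lemma colnorm_Dl : 0 <= t -> colnorm Dl <= t.
Proof.
move=> t0; rewrite /colnorm; apply: ge_sup.
  exists (Num.sqrt (\sum_(k < d) vsq (Dl k *m 0))), 0; split => //.
  by rewrite /vsq big1 // => i _; rewrite mxE /normsq /= expr0n /= addr0.
move=> _ [v [hv ->]].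
rewrite -(ger0_norm t0) -sqrtr_sqr ler_sqrt ?sqr_ge0 //.
have E1 : \sum_(k < d) vsq (Dl k *m v) =
  \sum_(P < l.+1 * n) (if actp P then t ^+ 2 * normsq (v (tgt P) 0) else 0).
  rewrite /vsq exchange_big /=; apply: eq_bigr => P _.
  under eq_bigr do rewrite Dl_mul.
  case: ifP => hP /=.
    rewrite (bigD1 (W (mxtens_unindex P).1)) //= eqxx normsq_realM big1 ?addr0 //.
    by move=> s /negbTE hs; rewrite eq_sym hs /normsq /= expr0n /= addr0.
  by rewrite big1 // => s _; rewrite /normsq /= expr0n /= addr0.
rewrite E1 -big_mkcond /= -mulr_sumr -[X in _ <= X]mulr1 ler_wpM2l ?sqr_ge0 //.
apply: le_trans hv.
have inj : {in [pred P | actp P] &, injective tgt}.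
  move=> P1 P2; rewrite !inE /actp /tgt => H1 H2 E.
  apply: (can_inj (@mxtens_unindexK _ _)).
  move: H1 H2 E; case: (mxtens_unindex P1) => [i1 x1]; case: (mxtens_unindex P2) => [i2 x2] /=.
  move=> /andP[h1 /eqP e1] /andP[h2 /eqP e2] /(can_inj (@mxtens_indexK _ _)) [].
  move=> /(congr1 val); rewrite /= !inordK ?ltnS // => -[] /val_inj e _.
  by rewrite e1 e2 e.
rewrite -(big_imset (fun Q => normsq (v Q 0)) inj) /=.
rewrite [X in _ <= X](bigID (fun Q => Q \in [set tgt x | x in [pred P | actp P]])) /=.
by rewrite lerDl; apply: sumr_ge0 => *; exact: normsq_ge0.
Qed.

Lemma block_Dl s (i j : 'I_l.+1) :
  block (Dl s) i j = if (i < l)%N && (W i == s) && (j == inord i.+1)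
                     then (t%:C)%C *: delta_mx (B i) (A i.+1) else 0.
Proof.
apply/matrixP => x y; rewrite !mxE /actp /tgt !mxtens_indexK /=.
rewrite (inj_eq (can_inj (@mxtens_indexK _ _))) xpair_eqE.
case: (i < l)%N; case: (W i == s); case: (j == _); rewrite /= ?mxE;
  case: (x == B i); case: (y == A i.+1); by rewrite /= ?mulr1 ?mulr0.
Qed.

End Delta.

Lemma path_id l' l (p : 'I_l'.+1 -> 'I_l.+1) : val (p ord0) = 0%N ->
  (forall k : 'I_l', val (p (lift ord0 k)) = (val (p (widen_ord (leqnSn l') k))).+1) ->
  forall k, val (p k) = val k.
Proof.
move=> h0 hs; suff H : forall j (k : 'I_l'.+1), val k = j -> val (p k) = j.
  by move=> k; exact: H.
elim=> [|j IH] k hk.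
  by have -> : k = ord0 by apply: val_inj.
have hj : (j < l')%N by rewrite -ltnS -hk ltn_ord.
have -> : k = lift ord0 (Ordinal hj) by apply: val_inj; rewrite /= hk.
by rewrite hs (IH (widen_ord _ (Ordinal hj))).
Qed.
Section Haag.
Variable R : realType.
Local Notation C := R[i].
Variables (n d : nat) (fhat : seq 'I_d -> seq 'I_n -> seq 'I_n -> C).
Variables (l : nat) (t : R) (A B : nat -> 'I_n) (W : nat -> 'I_d).
Variables (om : l.-tuple 'I_d) (al be : (l.+1).-tuple 'I_n).
Hypothesis hom : forall k : 'I_l, tnth om k = W k.
Hypothesis hal : forall k : 'I_l.+1, tnth al k = A k.
Hypothesis hbe : forall k : 'I_l.+1, tnth be k = B k.

Local Notation D := (@Dl R n d l t A B W).
Definition P0 : 'I_(l.+1 * n) := mxtens_index (ord0 : 'I_l.+1, A 0).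
Definition Q0 : 'I_(l.+1 * n) := mxtens_index (ord_max : 'I_l.+1, B l).

Definition Gp l' (w : l'.-tuple 'I_d) (p : {ffun 'I_l'.+1 -> 'I_l.+1}) (k : 'I_l') :=
  block (D (tnth w k)) (p (widen_ord (leqnSn l') k)) (p (lift ord0 k)).

Lemma haag_entry l' (w : l'.-tuple 'I_d) :
  (haag fhat w D) P0 Q0 =
  \sum_(p : {ffun 'I_l'.+1 -> 'I_l.+1} | (p ord0 == ord0) && (p ord_max == ord_max))
     (TTmap fhat w (Gp w p)) (A 0) (B l).
Proof. by rewrite /haag mxE !mxtens_indexK /= summxE. Qed.

Lemma TTmap_zero l' (w : l'.-tuple 'I_d) (G : 'I_l' -> 'M[C]_n) k :
  G k = 0 -> TTmap fhat w G = 0.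
Proof.
move=> Gk; rewrite /TTmap big1 // => al' _; rewrite big1 // => be' _.
by rewrite (chain_zero _ _ Gk) scaler0.
Qed.

Lemma term_nonzero l' (w : l'.-tuple 'I_d) (p : {ffun 'I_l'.+1 -> 'I_l.+1}) :
  p ord0 = ord0 -> p ord_max = ord_max ->
  (forall k, Gp w p k <> 0) ->
  [/\ l' = l, (forall k, val (p k) = val k) & (forall k : 'I_l', tnth w k = W k)].
Proof.
move=> h0 h1 hG.
have cond : forall k : 'I_l', [&& (p (widen_ord (leqnSn l') k) < l)%N,
      W (p (widen_ord (leqnSn l') k)) == tnth w k &
      p (lift ord0 k) == inord (p (widen_ord (leqnSn l') k)).+1].
  move=> k; have := hG k; rewrite /Gp block_Dl.
  by case: ifP => // /andP[/andP[-> ->] ->].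
have hid : forall k, val (p k) = val k.
  apply: path_id; first by rewrite h0.
  move=> k; have /and3P[hk _ /eqP ->] := cond k.
  by apply: inordK; rewrite ltnS.
split => //.
  by have := hid ord_max; rewrite h1 /= => ->.
move=> k; have /and3P[_ /eqP <- _] := cond k.
by congr W; rewrite hid.
Qed.

Lemma F_other l' : l' != l ->
  (\sum_(w : l'.-tuple 'I_d) haag fhat w D) P0 Q0 = 0.
Proof.
move=> hl; rewrite summxE big1 // => w _; rewrite haag_entry big1 // => p /andP[/eqP h0 /eqP h1].
have [[k hk]|H] := pselect (exists k, Gp w p k = 0).
  by rewrite (TTmap_zero _ hk) mxE.
have [e _ _] := term_nonzero h0 h1 (fun k e => H (ex_intro _ k e)).
by move/eqP: hl.
Qed.

Definition idp : {ffun 'I_l.+1 -> 'I_l.+1} := [ffun k => k].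

Lemma nth_al k : (k < l.+1)%N -> nth (A 0) al k = A k.
Proof. by move=> hk; have := hal (Ordinal hk); rewrite (tnth_nth (A 0)). Qed.
Lemma nth_be k : (k < l.+1)%N -> nth (A 0) be k = B k.
Proof. by move=> hk; have := hbe (Ordinal hk); rewrite (tnth_nth (A 0)). Qed.

Lemma F_l :
  (\sum_(w : l.-tuple 'I_d) haag fhat w D) P0 Q0 = (t%:C)%C ^+ l * fhat om al be.
Proof.
rewrite summxE (bigD1 om) //= big1 ?addr0; last first.
  move=> w hw; rewrite haag_entry big1 // => p /andP[/eqP h0 /eqP h1].
  have [[k hk]|H] := pselect (exists k, Gp w p k = 0).
    by rewrite (TTmap_zero _ hk) mxE.
  have [_ _ e] := term_nonzero h0 h1 (fun k e => H (ex_intro _ k e)).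
  exfalso; move/eqP: hw; apply; apply: eq_from_tnth => k; by rewrite e hom.
rewrite haag_entry (bigD1 idp) /=; last by rewrite !ffunE !eqxx.
rewrite big1 ?addr0; last first.
  move=> p /andP[/andP[/eqP h0 /eqP h1] hp].
  have [[k hk]|H] := pselect (exists k, Gp om p k = 0).
    by rewrite (TTmap_zero _ hk) mxE.
  have [_ e _] := term_nonzero h0 h1 (fun k e => H (ex_intro _ k e)).
  exfalso; move/negP: hp; apply; apply/eqP/ffunP => k; rewrite ffunE; exact: val_inj (e k).
have HG : forall k : 'I_l, Gp om idp k = (t%:C)%C *: delta_mx (B k) (A k.+1).
  move=> k; rewrite /Gp !ffunE block_Dl /= ltn_ord hom eqxx /=.
  have -> : (lift ord0 k == inord k.+1 :> 'I_l.+1) by apply/eqP/val_inj; rewrite /= inordK // ltnS.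
  done.
rewrite /TTmap summxE (bigD1 al) //= summxE (bigD1 be) //= big1 ?addr0; last first.
  move=> be' hbe'; rewrite !mxE (chain_delta _ _ (c := fun _ => (t%:C)%C) (U := B)
     (V := fun k => A k.+1) (A 0) HG) !mxE.
  case: ifP => [/allP Hall|_]; last by rewrite !mul0r mulr0.
  have [hb|hb] := eqVneq (tnth be' ord_max) (B l); last by rewrite andbF mulr0 mulr0.
  move: hbe'; have -> : be' = be; last by rewrite eqxx.
  apply: eq_from_tnth => k; rewrite hbe.
  have [kl|kl] := ltnP k l.
    have := Hall k; rewrite mem_iota /= => /(_ kl) /andP[/eqP <- _].
    by rewrite (tnth_nth (A 0)).
  have -> : k = ord_max by apply: val_inj => /=; apply/eqP; rewrite eqn_leq kl -ltnS ltn_ord.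
  exact: hb.
rewrite big1 ?addr0; last first.
  move=> al' hal'; rewrite summxE big1 // => be' _.
  rewrite !mxE (chain_delta _ _ (c := fun _ => (t%:C)%C) (U := B)
     (V := fun k => A k.+1) (A 0) HG) !mxE.
  case: ifP => [/allP Hall|_]; last by rewrite !mul0r mulr0.
  have [ha|ha] := eqVneq (tnth al' ord0) (A 0); last by rewrite mulr0 mulr0.
  move: hal'; have -> : al' = al; last by rewrite eqxx.
  apply: eq_from_tnth => k; rewrite hal.
  case: k => [[|k] hk].
    by rewrite -ha; congr tnth; apply: val_inj.
  have kl : (k < l)%N by [].
  have := Hall k; rewrite mem_iota /= => /(_ kl) /andP[_ /eqP ->].
  by rewrite (tnth_nth (A 0)).
rewrite !mxE (chain_delta _ _ (c := fun _ => (t%:C)%C) (U := B)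
     (V := fun k => A k.+1) (A 0) HG) !mxE.
have -> : all (fun k => (nth (A 0) be k == B k) && (A k.+1 == nth (A 0) al k.+1)) (iota 0 l).
  apply/allP => k; rewrite mem_iota /= => hk.
  rewrite nth_be ?nth_al ?ltnS ?eqxx //; exact: ltnW.
rewrite hal hbe !eqxx /= mulr1 mulrC; congr (_ * _).
have -> : iota 0 l = index_iota 0 l by rewrite /index_iota subn0.
by rewrite prodr_const_nat subn0.
Qed.

End Haag.
Section Main.
Variable R : realType.
Local Notation C := R[i].

Lemma sum_if_eq (L l : nat) (V : C) :
  \sum_(i < L) (if (i : nat) == l then V else 0) = if (l < L)%N then V else 0.
Proof.
case: ltnP => h.
  rewrite (bigD1 (Ordinal h)) //= eqxx big1 ?addr0 // => i hi.
  case: eqP => // e; move: hi; have -> : i = Ordinal h by apply: val_inj.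
  by rewrite eqxx.
rewrite big1 // => i _; case: eqP => // e.
by move: (ltn_ord i); rewrite e ltnNge h.
Qed.

Lemma key_bound (d n : nat) (Om : ncset R d) (f : ncmap R d) (Y : 'I_d -> 'M[C]_n)
   (fhat : seq 'I_d -> seq 'I_n -> seq 'I_n -> C) (r1 r2 M t : R) (a b : 'I_n) :
  0 < t -> t < r1 -> t < r2 ->
  (forall m, (0 < m)%N -> forall X', inball (m:=m) Y r1 X' ->
      Om (m * n)%N X' /\ opnorm (f (m * n)%N X') <= M) ->
  (forall m, (0 < m)%N ->
    forall X : 'I_d -> 'M[C]_(m * n), inball (m:=m) Y r2 X ->
      Om (m * n)%N X /\
      forall p q (eps : R), 0 < eps -> exists L0 : nat, forall L, (L0 <= L)%N ->
        normsq ((TTsum fhat Y X L) p q - f (m * n)%N X p q) < eps) ->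
  forall l (nu : l.-tuple ('I_n * 'I_n * 'I_d)), (0 < l)%N ->
    (t ^+ l) ^+ 2 * normsq (fab fhat a b nu) <= M ^+ 2.
Proof.
move=> t0 tr1 tr2 hM HT l nu l0.
have szA : size (rcons (map (fun v => v.1.1) nu) a) == l.+1
  by rewrite size_rcons size_map size_tuple.
have szB : size (rcons (map (fun v => v.1.2) nu) b) == l.+1
  by rewrite size_rcons size_map size_tuple.
pose al : (l.+1).-tuple 'I_n := Tuple szA.
pose be : (l.+1).-tuple 'I_n := Tuple szB.
pose om : l.-tuple 'I_d := map_tuple (fun v => v.2) nu.
pose w0 : 'I_d := (tnth nu (Ordinal l0)).2.
pose A k := nth a al k. pose B k := nth b be k. pose W k := nth w0 om k.
have hom : forall k : 'I_l, tnth om k = W k by move=> k; rewrite (tnth_nth w0).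
have hal : forall k : 'I_l.+1, tnth al k = A k by move=> k; rewrite (tnth_nth a).
have hbe : forall k : 'I_l.+1, tnth be k = B k by move=> k; rewrite (tnth_nth b).
pose D := Dl l t A B W.
pose X : 'I_d -> 'M[C]_(l.+1 * n) := fun s => D s + ampl l.+1 (Y s).
have hXY : (fun s => X s - ampl l.+1 (Y s)) = D.
  by apply: funext => s; rewrite /X addrK.
have cD : colnorm D <= t by apply: colnorm_Dl; exact: ltW.
have in1 : inball (m:=l.+1) Y r1 X by rewrite /inball hXY; exact: le_lt_trans cD tr1.
have in2 : inball (m:=l.+1) Y r2 X by rewrite /inball hXY; exact: le_lt_trans cD tr2.
have [_ hop] := hM l.+1 (ltn0Sn l) X in1.
have [_ conv] := HT l.+1 (ltn0Sn l) X in2.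
pose V := (t%:C)%C ^+ l * fhat om al be.
have TTE : forall L, (TTsum fhat Y X L) (P0 l A) (Q0 l B) = if (l < L)%N then V else 0.
  move=> L; rewrite /TTsum hXY summxE -sum_if_eq; apply: eq_bigr => -[i hi] _ /=.
  have [e|ne] := eqVneq i l.
    by subst i; rewrite (F_l fhat t hom hal hbe).
  by rewrite (F_other fhat t A B W ne).
have EV : V = f (l.+1 * n)%N X (P0 l A) (Q0 l B).
  set z := f _ X _ _.
  have hz : normsq (V - z) <= 0.
    rewrite leNgt; apply/negP => hpos.
    have [L0 HL] := conv (P0 l A) (Q0 l B) _ hpos.
    have := HL (maxn L0 l.+1) (leq_maxl _ _).
    by rewrite TTE leq_max ltnSn orbT ltxx.
  by apply/eqP; rewrite -subr_eq0; apply/eqP/normsq_eq0/le_anti; rewrite hz normsq_ge0.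
have hsq := entry_le_opnorm (f (l.+1 * n)%N X) (P0 l A) (Q0 l B).
have M0 : 0 <= M by apply: le_trans hop; apply: le_trans hsq; exact: sqrtr_ge0.
have : normsq V <= M ^+ 2.
  rewrite EV -[normsq _]sqr_sqrtr ?normsq_ge0 //.
  rewrite ler_pXn2r ?nnegrE ?sqrtr_ge0 //; exact: le_trans hsq hop.
by rewrite /V -rmorphXn normsq_realM.
Qed.

End Main.

Local Close Scope complex_scope.
Unset Implicit Arguments.

Theorem mainTheorem12 (R : realType) (d n : nat)
    (Om : ncset R d) (f : ncmap R d) (Y : 'I_d -> 'M[R[i]]_n) :
  nc_function Om f -> unif_analytic Om f -> Om n Y ->
  forall fhat : seq 'I_d -> seq 'I_n -> seq 'I_n -> R[i],
  TT_expansion Om f Y fhat ->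
  forall a b : 'I_n, (0 < radius (fab fhat a b))%E.
Proof.
move=> _ [_ hlb] OmY fhat [r2 r2p HT] a b.
have [r1 r1p [M hM]] := hlb n Y OmY.
pose t := Num.min r1 r2 / 2.
have hm : 0 < Num.min r1 r2 by rewrite lt_min r1p r2p.
have t0 : 0 < t by rewrite /t divr_gt0.
have tm : t < Num.min r1 r2 by rewrite /t ltr_pdivrMr // ltr_pMr // ltr1n.
have tr1 : t < r1 by apply: lt_le_trans tm _; rewrite ge_min lexx.
have tr2 : t < r2 by apply: lt_le_trans tm _; rewrite ge_min lexx orbT.
clearbody t.
have mx0 : 0 <= Num.max 1 (M ^+ 2) by rewrite le_max ler01.
apply: (@radius_pos R _ _ ((#|{: 'I_n * 'I_n * 'I_d}|%:R * Num.max 1 (M ^+ 2)) / t ^+ 2)).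
  by rewrite divr_ge0 ?sqr_ge0 // mulr_ge0.
move=> l l0.
have kb := key_bound a b t0 tr1 tr2 hM HT.
have T0 : 0 < (t ^+ 2) ^+ l by rewrite exprn_gt0 // exprn_gt0.
apply: (@le_trans _ _ (\sum_(nu : l.-tuple ('I_n * 'I_n * 'I_d)) (M ^+ 2 / (t ^+ 2) ^+ l))).
  apply: ler_sum => nu _; rewrite ler_pdivlMr // mulrC -exprAC; exact: kb.
rewrite sumr_const card_tuple -(mulr_natl (M ^+ 2 / _)) natrX.
set c := (#|_|%:R : R).
have -> : ((c * Num.max 1 (M ^+ 2)) / t ^+ 2) ^+ l =
   c ^+ l * (Num.max 1 (M ^+ 2) ^+ l / (t ^+ 2) ^+ l) by rewrite expr_div_n exprMn mulrA.
apply: ler_wpM2l; first by rewrite exprn_ge0 // /c ler0n.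
apply: ler_wpM2r; first by rewrite invr_ge0 exprn_ge0 // sqr_ge0.
apply: le_trans (ler_eXnr l0 _); rewrite le_max ?lexx ?orbT //.
Qed.
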